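(* Let $\mathbb{F}$ be an infinite field with $\operatorname{char}(\mathbb{F})\neq 2$ and let $G$ be a non-abelian group with a group involution $\ast$ and a non-trivial orientation $\sigma:G\to\{\pm1\}$ such that $gg^\ast\in N=\ker\sigma$ for all $g\in G$. Suppose $\mathbb{F}G$ is normal with respect to the oriented involution $\circledast$ and that $N$, with the restriction of $\ast$, is an SLC-group with unique non-identity commutator $s$. Then there exists $g_0\in G\setminus N$ such that $g_0\in C_G(N)$ and $g_0^\ast=sg_0$. Consequently, $g_0$ is central in $G$.
   Context: A group involution on $G$ is a map $\ast:G\to G$ with $(gh)^\ast=h^\ast g^\ast$ and $(g^\ast)^\ast=g$. An orientation is a group homomorphism $\sigma:G\to\{\pm1\}$. The oriented involution is $(\sum_g\alpha_g g)^\circledast=\sum_g\alpha_g\sigma(g)g^\ast$ on $\mathbb{F}G$. $\mathbb{F}G$ is normal if $\alpha\alpha^\circledast=\alpha^\circledast\alpha$ for all $\alpha\in\mathbb{F}G$. $C_G(N)$ is the centralizer of $N$ in $G$. $(g,h)=g^{-1}h^{-1}gh$. A group $H$ is an LC-group if it is non-abelian and for all $g,h\in H$: $gh=hg$ iff at least one of $g,h,gh$ is in $\zeta(H)$. $H$ with involution $\ast$ is an SLC-group if it is an LC-group with a unique non-identity commutator $s$ (i.e. $\{(g,h):g,h\in H\}=\{1,s\}$) and $h^\ast=h$ for $h\in\zeta(H)$, $h^\ast=sh$ for $h\notin\zeta(H)$. *)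

(* Defs.v *)
From HB Require Import structures.
From mathcomp Require Import all_boot all_order all_algebra all_fingroup.
Set Implicit Arguments. Unset Strict Implicit. Unset Printing Implicit Defensive.
Import GRing.Theory.

Section Defs.
Variable G : groupType.
Local Open Scope group_scope.

Definition group_involution (star : G -> G) : Prop :=
  (forall g h, star (g * h) = star h * star g) /\ (forall g, star (star g) = g).

Definition orientation (sigma : G -> int) : Prop :=
  (forall g, sigma g = 1%R \/ sigma g = (-1)%R) /\
  (forall g h, sigma (g * h) = (sigma g * sigma h)%R).

Definition kerN (sigma : G -> int) : pred G := fun g => sigma g == 1%R.

Definition zeta (N : pred G) (h : G) : Prop :=
  h \in N /\ (forall m, m \in N -> h * m = m * h).

Definition LC_group (N : pred G) : Prop :=
  (exists g h, [/\ g \in N, h \in N & g * h <> h * g]) /\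
  (forall g h, g \in N -> h \in N ->
     (g * h = h * g <-> [\/ zeta N g, zeta N h | zeta N (g * h)])).

(* N with involution star is an SLC-group with unique non-identity
   commutator s; commutator (g,h) = g^-1 h^-1 g h = [~ g, h]. *)
Definition SLC_group (N : pred G) (star : G -> G) (s : G) : Prop :=
  [/\ LC_group N,
      s <> 1,
      (forall g h, g \in N -> h \in N -> [~ g, h] = 1 \/ [~ g, h] = s),
      (exists g h, [/\ g \in N, h \in N & [~ g, h] = s]) &
      (forall h, h \in N ->
         (zeta N h -> star h = h) /\ (~ zeta N h -> star h = s * h))].

End Defs.

Section GroupRing.
Variables (F : fieldType) (G : groupType).

(* Elements of the group algebra FG are written as formal finite sums
   sum_i a_i g_i, represented by a list of pairs (a_i, g_i); two formal sums
   denote the same element iff all their coefficients agree. *)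
Definition gr_coef (x : seq (F * G)) (h : G) : F :=
  (\sum_(p <- x | p.2 == h) p.1)%R.

Definition gr_mul (x y : seq (F * G)) : seq (F * G) :=
  [seq ((p.1 * q.1)%R, (p.2 * q.2)%g) | p <- x, q <- y].

Definition gr_oinv (sigma : G -> int) (star : G -> G) (x : seq (F * G))
  : seq (F * G) :=
  [seq ((p.1 * (sigma p.2)%:~R)%R, star p.2) | p <- x].

Definition gr_normal (sigma : G -> int) (star : G -> G) : Prop :=
  forall x : seq (F * G), forall h : G,
    gr_coef (gr_mul x (gr_oinv sigma star x)) h =
    gr_coef (gr_mul (gr_oinv sigma star x) x) h.

End GroupRing.

(* Main.v *)
Require Import Defs.
From HB Require Import structures.
From mathcomp Require Import all_boot all_order all_algebra all_fingroup.
From mathcomp Require Import ring.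
From Stdlib Require Import Classical.
Import GRing.Theory.
Local Open Scope group_scope.

Definition ind (F : fieldType) {G : groupType} (u k : G) : F := if u == k then 1%R else 0%R.

Lemma gcoef1 (F : fieldType) (G : groupType) sigma star (h k : G) :
  gr_coef (gr_mul [:: (1%R : F, h)] (gr_oinv sigma star [:: (1%R, h)])) k =
  ((sigma h)%:~R * ind F (h * star h)%g k)%R.
Proof.
rewrite /gr_coef /gr_mul /gr_oinv /= !big_cons !big_nil /= /ind.
case: eqP => _; ring.
Qed.

Lemma gcoef1' (F : fieldType) (G : groupType) sigma star (h k : G) :
  gr_coef (gr_mul (gr_oinv sigma star [:: (1%R, h)]) [:: (1%R : F, h)]) k =
  ((sigma h)%:~R * ind F (star h * h)%g k)%R.
Proof.
rewrite /gr_coef /gr_mul /gr_oinv /= !big_cons !big_nil /= /ind.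
case: eqP => _; ring.
Qed.

Lemma gcoef2 (F : fieldType) (G : groupType) sigma star (a b k : G) :
  gr_coef (gr_mul [:: (1%R : F, a); (1%R, b)] (gr_oinv sigma star [:: (1%R, a); (1%R, b)])) k =
  ((sigma a)%:~R * ind F (a * star a)%g k + (sigma b)%:~R * ind F (a * star b)%g k
   + (sigma a)%:~R * ind F (b * star a)%g k + (sigma b)%:~R * ind F (b * star b)%g k)%R.
Proof.
rewrite /gr_coef /gr_mul /gr_oinv /= !big_cons !big_nil /= /ind.
by do 4 case: eqP => _; ring.
Qed.

Lemma gcoef2' (F : fieldType) (G : groupType) sigma star (a b k : G) :
  gr_coef (gr_mul (gr_oinv sigma star [:: (1%R, a); (1%R, b)]) [:: (1%R : F, a); (1%R, b)]) k =
  ((sigma a)%:~R * ind F (star a * a)%g k + (sigma a)%:~R * ind F (star a * b)%g k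
   + (sigma b)%:~R * ind F (star b * a)%g k + (sigma b)%:~R * ind F (star b * b)%g k)%R.
Proof.
rewrite /gr_coef /gr_mul /gr_oinv /= !big_cons !big_nil /= /ind.
by do 4 case: eqP => _; ring.
Qed.

Lemma sig_neq0 (F : fieldType) (z : int) : (z = 1%R \/ z = (-1)%R) -> ((z%:~R : F) != 0)%R.
Proof. by case=> ->; rewrite ?rmorphN rmorph1 ?oppr_eq0 oner_eq0. Qed.

Lemma norm_comm (F : fieldType) (G : groupType) sigma star (h : G) :
  gr_normal F sigma star -> (sigma h = 1%R \/ sigma h = (-1)%R) ->
  h * star h = star h * h.
Proof.
move=> Hn Hs; have := Hn [:: (1%R, h)] (h * star h).
rewrite gcoef1 gcoef1' /ind eqxx; case: eqP => // _ /eqP.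
rewrite mulr1 mulr0 => H; by move: (sig_neq0 F _ Hs); rewrite H.
Qed.

Lemma gpair_eq (F : fieldType) (G : groupType) sigma star (a b k : G) :
  gr_normal F sigma star ->
  ((sigma b)%:~R * ind F (a * star b)%g k + (sigma a)%:~R * ind F (b * star a)%g k =
   (sigma a)%:~R * ind F (star a * b)%g k + (sigma b)%:~R * ind F (star b * a)%g k)%R.
Proof.
move=> Hn.
have Ea := Hn [:: (1%R, a)] k; rewrite gcoef1 gcoef1' in Ea.
have Eb := Hn [:: (1%R, b)] k; rewrite gcoef1 gcoef1' in Eb.
have E2 := Hn [:: (1%R, a); (1%R, b)] k; rewrite gcoef2 gcoef2' in E2.
have -> : ((sigma b)%:~R * ind F (a * star b)%g k + (sigma a)%:~R * ind F (b * star a)%g k =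
   ((sigma a)%:~R * ind F (a * star a)%g k + (sigma b)%:~R * ind F (a * star b)%g k
   + (sigma a)%:~R * ind F (b * star a)%g k + (sigma b)%:~R * ind F (b * star b)%g k)
   - (sigma a)%:~R * ind F (a * star a)%g k - (sigma b)%:~R * ind F (b * star b)%g k)%R by ring.
rewrite E2 Ea Eb; ring.
Qed.

Lemma multiset2 (F : fieldType) (G : groupType) (x y u v : G) :
  ((2%:R : F) != 0)%R ->
  (forall k, ind F x k + ind F y k = ind F u k + ind F v k)%R ->
  (x = u /\ y = v) \/ (x = v /\ y = u).
Proof.
move=> H2 H.
have Hx := H x; move: Hx; rewrite /ind eqxx.
have Hc : forall (z w : G), (forall k, ind F z k = ind F w k) -> z = w.
  move=> z w Hzw; have := Hzw z; rewrite /ind eqxx; case: eqP => // _ /eqP.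
  by rewrite oner_eq0.
case: (eqVneq u x) => [Eux|Hux].
  subst u; move=> _; left; split=> //; apply: Hc => k; apply: (addrI (ind F x k)); exact: H.
case: (eqVneq v x) => [Evx|Hvx].
  subst v; move=> _; right; split=> //; apply: Hc => k; apply: (addrI (ind F x k)).
  by rewrite H addrC.
rewrite addr0.
case: eqP => _ /eqP; first by rewrite (negbTE H2).
by rewrite addr0 oner_eq0.
Qed.

Lemma P2 (F : fieldType) (G : groupType) sigma star (a b : G) :
  ((2%:R : F) != 0)%R -> gr_normal F sigma star -> sigma a = 1%R -> sigma b = (-1)%R ->
  (b * star a = star a * b /\ star b * a = a * star b) \/
  (b * star a = a * star b /\ star b * a = star a * b).
Proof.
move=> H2 Hn Ha Hb; apply: (@multiset2 F) => // k.
have := @gpair_eq F G sigma star a b k Hn; rewrite Ha Hb rmorphN rmorph1 !mulN1r !mul1r => E.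
have -> : (ind F (b * star a) k + ind F (star b * a) k =
  (- ind F (a * star b) k + ind F (b * star a) k) + ind F (star b * a) k + ind F (a * star b) k)%R by ring.
rewrite E; ring.
Qed.

Lemma P1 (F : fieldType) (G : groupType) sigma star (a b : G) :
  ((2%:R : F) != 0)%R -> gr_normal F sigma star -> sigma a = (-1)%R -> sigma b = (-1)%R ->
  (a * star b = star a * b /\ b * star a = star b * a) \/
  (a * star b = star b * a /\ b * star a = star a * b).
Proof.
move=> H2 Hn Ha Hb; apply: (@multiset2 F) => // k.
have := @gpair_eq F G sigma star a b k Hn; rewrite Ha Hb rmorphN rmorph1 !mulN1r => E.
have -> : (ind F (a * star b) k + ind F (b * star a) k =
  - (- ind F (a * star b) k + - ind F (b * star a) k))%R by ring.
rewrite E; ring.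
Qed.

Lemma inN (G : groupType) (sigma : G -> int) x : (x \in kerN sigma) = (sigma x == 1%R).
Proof. by []. Qed.

Lemma sq1 (z : int) : (z = 1%R \/ z = (-1)%R) -> (z * z = 1)%R.
Proof. by case=> ->. Qed.

Lemma m1neq1 : ((-1)%R : int) <> 1%R.
Proof. by []. Qed.

Theorem lemma11 (F : fieldType) (G : groupType) (star : G -> G)
    (sigma : G -> int) (s : G) :
  ~ (exists e : seq F, forall a : F, a \in e) ->
  ((2%:R : F) != 0)%R ->
  (exists g h : G, g * h <> h * g) ->
  group_involution star ->
  orientation sigma ->
  (exists g : G, sigma g <> 1%R) ->
  (forall g : G, g * star g \in kerN sigma) ->
  gr_normal F sigma star ->
  SLC_group (kerN sigma) star s ->
  exists g0 : G,
    [/\ g0 \notin kerN sigma,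
        (forall n : G, n \in kerN sigma -> g0 * n = n * g0),
        star g0 = s * g0 &
        (forall g : G, g0 * g = g * g0)].
Proof.
move=> _ H2 _ [Hsm Hss] [Hsv Hsmul] [g Hg] _ Hn
  [[[n1 [n2 [Hn1 Hn2 Hn12]]] _] Hs1 Hcomm [a [b [Ha Hb Hab]]] Hstar].
have sig1 : sigma 1 = 1%R.
  have := Hsmul 1 1; rewrite mulg1; case: (Hsv 1) => -> //.
have sigV : forall x, sigma x^-1 = sigma x.
  move=> x; have := Hsmul x^-1 x; rewrite mulVg sig1.
  by case: (Hsv x) => ->; case: (Hsv x^-1) => ->.
have notN : forall x, x \notin kerN sigma -> sigma x = (-1)%R.
  by move=> x; rewrite inN; case: (Hsv x) => ->.
have notN' : forall x, sigma x = (-1)%R -> x \notin kerN sigma.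
  by move=> x; rewrite inN => ->.
have inN' : forall x, x \in kerN sigma -> sigma x = 1%R.
  by move=> x; rewrite inN => /eqP.
have Nmul : forall x y, x \in kerN sigma -> y \in kerN sigma -> x * y \in kerN sigma.
  by move=> x y; rewrite !inN Hsmul => /eqP -> /eqP ->.
have NJ : forall x y, x \in kerN sigma -> x ^ y \in kerN sigma.
  move=> x y; rewrite !inN conjgE !Hsmul sigV => /eqP ->; rewrite mul1r.
  by rewrite sq1.
have sC : forall x, s * x = x * s.
  move=> x; rewrite conjgC; congr (_ * _).
  case: (Hcomm (a ^ x) (b ^ x) (NJ _ _ Ha) (NJ _ _ Hb)); rewrite -conjRg Hab //.
  by move/eqP; rewrite conjg_eq1 => /eqP.
have sL : forall x y, x * (s * y) = s * (x * y).
  by move=> x y; rewrite mulgA -sC mulgA.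
have comm_s : forall x y, x \in kerN sigma -> y \in kerN sigma -> x * y <> y * x ->
    y * x = s * (x * y).
  move=> x y Hx Hy Hxy; rewrite commgC (sC (x * y)).
  case: (Hcomm y x Hy Hx) => E; rewrite E //.
  by move: E; move/eqP/commgP => E; case: Hxy.
have nz : forall x y, x \in kerN sigma -> y \in kerN sigma -> x * y <> y * x ->
    ~ zeta (kerN sigma) x.
  by move=> x y Hx Hy Hxy [_ Z]; apply: Hxy; apply: Z.
have nz1 : ~ zeta (kerN sigma) n1 by apply: nz Hn1 Hn2 Hn12.
have nz2 : ~ zeta (kerN sigma) n2.
  by apply: nz Hn2 Hn1 _ => E; apply: Hn12.
have nz12 : ~ zeta (kerN sigma) (n1 * n2).
  move=> [_ Z]; have := Z n1 Hn1; rewrite -!mulgA => /mulgI E; exact: Hn12 (esym E).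
have Hstar' : forall n, n \in kerN sigma -> ~ zeta (kerN sigma) n -> star n = s * n.
  by move=> n Hn0 Hz; apply: (Hstar n Hn0).2.
have F0 : forall h, h * star h = star h * h.
  by move=> h; apply: (@norm_comm F).
have cent_case : forall h, h \notin kerN sigma ->
    (forall n, n \in kerN sigma -> h * n = n * h) -> star h = s * h.
  move=> h hN Hc.
  have sb : sigma (h * n2) = (-1)%R by rewrite Hsmul notN // inN' // mulr1.
  case: (@P2 F G sigma star n1 (h * n2) H2 Hn (inN' _ Hn1) sb);
    rewrite Hsm (Hstar' n1 Hn1 nz1) (Hstar' n2 Hn2 nz2) => -[E1 E2].
    exfalso; move: E1; rewrite !mulgA -(mulgA h n2 s) -(sC n2) mulgA.
    rewrite -(mulgA s n1 h) -(Hc n1 Hn1) mulgA (sC h) -!mulgA => /mulgI /mulgI E.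
    exact: Hn12 (esym E).
  apply: (@mulgI _ (n1 * (s * n2))); rewrite -mulgA -E1.
  rewrite -!mulgA (sL n2) (sL h) (sL n2) (sL n1) (sL n1) (comm_s n1 n2) // (sL h).
  do 2 congr (_ * _); by rewrite (Hc _ (Nmul _ _ Hn1 Hn2)) mulgA.
have noncomm_contra : forall h n, h * n <> n * h -> h * (s * n) <> s * n * h.
  by move=> h n Hhn; rewrite (sL h) -mulgA => /mulgI.
have noncent_case : forall h n, h \notin kerN sigma -> n \in kerN sigma ->
    ~ zeta (kerN sigma) n -> h * n <> n * h -> star h = h.
  move=> h n hN nN nZ Hhn.
  have sh := notN _ hN.
  have shn : sigma (h * n) = (-1)%R by rewrite Hsmul sh inN' // mulr1.
  case: (@P2 F G sigma star n h H2 Hn (inN' _ nN) sh); rewrite (Hstar' n nN nZ) => -[E1 E2].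
    by case: (noncomm_contra h n Hhn).
  case: (@P1 F G sigma star h (h * n) H2 Hn sh shn); rewrite Hsm (Hstar' n nN nZ) => -[A1 A2].
    move: A1; rewrite (mulgA (star h)) -F0 -(mulgA h) => /mulgI; rewrite E2 -!mulgA => /mulgI /mulgI //.
  move: A2; rewrite (mulgA (star h)) -F0 -!mulgA => /mulgI E.
  by case: (noncomm_contra h n Hhn); rewrite E1 E E2.
have dich : forall h, h \notin kerN sigma ->
    (forall n, n \in kerN sigma -> h * n = n * h) \/ star h = h.
  move=> h hN; case: (classic (forall n, n \in kerN sigma -> h * n = n * h)) => C; [by left|right].
  have [n Hn'] := not_all_ex_not _ _ C.
  have [nN Hhn] := imply_to_and _ _ Hn'.
  case: (classic (zeta (kerN sigma) n)) => Zn; last exact: noncent_case h n hN nN Zn Hhn.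
  case: (classic (h * n1 = n1 * h)) => H1; last exact: noncent_case h n1 hN Hn1 nz1 H1.
  apply: (noncent_case h (n * n1) hN (Nmul _ _ nN Hn1)).
    have Zn2 : n * n2 = n2 * n by case: Zn => _ Z0; exact: Z0 n2 Hn2.
    move=> [_ Z]; have := Z n2 Hn2; rewrite -mulgA (mulgA n2) -Zn2 -mulgA.
    move=> /mulgI E; exact: (Hn12 E).
  move=> E; apply: Hhn; move: E; rewrite mulgA -(mulgA n) -H1 mulgA; exact: mulIg.
have done_if : forall h, h \notin kerN sigma ->
    (forall n, n \in kerN sigma -> h * n = n * h) ->
    exists g0 : G,
    [/\ g0 \notin kerN sigma,
        (forall n : G, n \in kerN sigma -> g0 * n = n * g0),
        star g0 = s * g0 &
        (forall g : G, g0 * g = g * g0)].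
  move=> h hN Hc; exists h; split => //; first exact: cent_case.
  move=> x; case: (boolP (x \in kerN sigma)) => xN; first exact: Hc.
  have kN : h^-1 * x \in kerN sigma.
    by rewrite inN Hsmul sigV !notN.
  by rewrite -(mulVKg h x) -mulgA -(Hc _ kN).
have gN : g \notin kerN sigma by rewrite inN; apply/eqP.
have Nn : forall n, n \in kerN sigma -> g * n \notin kerN sigma.
  by move=> n nN; apply: notN'; rewrite Hsmul notN // inN' // mulr1.
have N12 := Nmul _ _ Hn1 Hn2.
case: (dich g gN) => [C|Eg]; first exact: done_if _ gN C.
case: (dich _ (Nn _ Hn1)) => [C|E1]; first exact: done_if _ (Nn _ _) C.
case: (dich _ (Nn _ Hn2)) => [C|E2]; first exact: done_if _ (Nn _ _) C.
case: (dich _ (Nn _ N12)) => [C|E12]; first exact: done_if _ (Nn _ _) C.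
exfalso.
have K : forall n, n \in kerN sigma -> ~ zeta (kerN sigma) n -> star (g * n) = g * n ->
    g * n = s * n * g.
  by move=> n nN nZ; rewrite Hsm (Hstar' n nN nZ) Eg.
have K1 := K _ Hn1 nz1 E1.
have K2 := K _ Hn2 nz2 E2.
have K12 := K _ N12 nz12 E12.
move: K12; rewrite mulgA K1 -!mulgA K2 -!mulgA (sL n1) => /mulgI E.
apply: Hs1; move: E; rewrite -{2}(mul1g (n1 * (n2 * g))); exact: mulIg.
Qed.
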